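(* Let $t$ be an odd positive integer. Then for every integer $n\ge0$, $$b^{3}_{2,3t}(3n+2)\equiv 0\pmod 6.$$
   Context: For integers $r\ge1$ write $f_r=\prod_{i\ge1}(1-q^{ri})$. For coprime positive integers $\ell,m$ and a positive integer $k$, $b^{k}_{\ell,m}(n)$ denotes the number of $k$-colored partitions of $n$ into parts not divisible by $\ell$ or by $m$, i.e. $\sum_{n\ge0} b^{k}_{\ell,m}(n)q^n=\dfrac{f_\ell^k f_m^k}{f_1^k f_{\ell m}^k}$. Thus $\sum b^3_{2,3t}(n)q^n=\dfrac{f_2^3f_{3t}^3}{f_1^3f_{6t}^3}$. *)

(* Defs.v *)
From mathcomp Require Import all_boot.
Set Implicit Arguments. Unset Strict Implicit. Unset Printing Implicit Defensive.

(* A k-colored partition of n is a finite multiset of colored parts (j, c),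
   j >= 1 a part size and c : 'I_k a color, with total size n.  We encode it by
   its multiplicity function f : (part, color) -> multiplicity; parts and
   multiplicities are at most n, so the domain 'I_n.+1 * 'I_k and codomain
   'I_n.+1 lose nothing.
   colored_partitions_avoid k l m n = number of k-colored partitions of n
   into parts divisible neither by l nor by m. *)
Definition colored_partitions_avoid (k l m n : nat) : nat :=
  #|[set f : {ffun 'I_n.+1 * 'I_k -> 'I_n.+1} |
      [forall p : 'I_n.+1 * 'I_k,
         (nat_of_ord (f p) != 0) ==>
           [&& 0 < nat_of_ord p.1, ~~ (l %| p.1) & ~~ (m %| p.1)]]
      && ((\sum_(p : 'I_n.+1 * 'I_k) (nat_of_ord p.1) * (nat_of_ord (f p))) == n)]|.

Definition b (k l m n : nat) : nat := colored_partitions_avoid k l m n.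

(* Main.v *)
Require Import Defs.
From mathcomp Require Import all_boot all_algebra.
From mathcomp Require Import zify ring.
Set Implicit Arguments. Unset Strict Implicit. Unset Printing Implicit Defensive.
Import GRing.Theory Num.Theory.
Local Open Scope ring_scope.



Section Eqm.
Variable F : fieldType.
Variable N : nat.
Definition eqm (p q : {poly F}) := 'X^(N.+1) %| p - q.

Lemma eqm_refl p : eqm p p.
Proof. by rewrite /eqm subrr dvdp0. Qed.
Lemma eqm_sym p q : eqm p q -> eqm q p.
Proof. by rewrite /eqm -opprB dvdpNr. Qed.
Lemma eqm_trans p q r : eqm p q -> eqm q r -> eqm p r.
Proof.
rewrite /eqm => h1 h2; have -> : p - r = (p - q) + (q - r) by ring.
exact: dvdp_add.
Qed.
Lemma eqm_mul p p' q q' : eqm p p' -> eqm q q' -> eqm (p * q) (p' * q').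
Proof.
rewrite /eqm => h1 h2.
have -> : p * q - p' * q' = p * (q - q') + (p - p') * q' by ring.
by apply: dvdp_add; [apply: dvdp_mull | apply: dvdp_mulr].
Qed.
Lemma eqm_add p p' q q' : eqm p p' -> eqm q q' -> eqm (p + q) (p' + q').
Proof.
rewrite /eqm => h1 h2.
have -> : p + q - (p' + q') = (p - p') + (q - q') by ring.
exact: dvdp_add.
Qed.
Lemma eqm_exp p q k : eqm p q -> eqm (p ^+ k) (q ^+ k).
Proof.
move=> h; elim: k => [|k IH]; first exact: eqm_refl.
by rewrite !exprS; apply: eqm_mul.
Qed.
Lemma eqm_coef p q i : eqm p q -> (i <= N)%N -> p`_i = q`_i.
Proof.
move=> /dvdpP [qq hq] hi; apply/eqP; rewrite -subr_eq0 -coefB hq coefMXn.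
by rewrite ltnS hi.
Qed.
Lemma eqm_Xbig k : (N < k)%N -> eqm ('X^k) 0.
Proof. by move=> hk; rewrite /eqm subr0 dvdp_exp2l. Qed.
Lemma eqm_1subX k : (N < k)%N -> eqm (1 - 'X^k) 1.
Proof.
move=> hk; rewrite /eqm; have -> : 1 - 'X^k - 1 = - 'X^k :> {poly F} by ring.
by rewrite dvdpNr dvdp_exp2l.
Qed.
Lemma eqm_prod (I : Type) (r : seq I) (P : pred I) (f g : I -> {poly F}) :
  (forall i, P i -> eqm (f i) (g i)) ->
  eqm (\prod_(i <- r | P i) f i) (\prod_(i <- r | P i) g i).
Proof.
move=> h; apply: (big_ind2 eqm (eqm_refl 1)) => //; exact: eqm_mul.
Qed.
Lemma eqm_cancel (p q r : {poly F}) : p`_0 != 0 -> eqm (p * q) (p * r) -> eqm q r.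
Proof.
move=> p0; rewrite /eqm -mulrBr mulrC Gauss_dvdpl //.
apply: coprimep_expl; rewrite coprimep_sym.
have -> : 'X = 'X - (0 : F)%:P :> {poly F} by rewrite polyC0 subr0.
by rewrite coprimep_XsubC rootE horner_coef0.
Qed.
End Eqm.


Fixpoint tri (k : nat) : nat := if k is k'.+1 then (tri k' + k)%N else 0%N.
Definition pp (k : nat) : nat := (k * k + tri k)%N.
Definition pm (k : nat) : nat := (k * k + tri k.-1)%N.

Section Shanks.
Variable R : comNzRingType.
Definition Ap (n k : nat) : {poly R} := \prod_(k <= i < n) (1 - 'X^(i.+1)).
Definition tS (n k : nat) : {poly R} := (-1) ^+ k * 'X^(n * k + tri k) * Ap n k.
Definition Sh (n : nat) : {poly R} := \sum_(k < n.+1) tS n k.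
Definition Th (n : nat) : {poly R} :=
  \sum_(k < n.+1) (-1) ^+ k * 'X^(pp k) + \sum_(k < n) (-1) ^+ k.+1 * 'X^(pm k.+1).

Lemma Th_S n : Th n.+1 = Th n + (-1) ^+ n.+1 * ('X^(pp n.+1) + 'X^(pm n.+1)).
Proof. rewrite /Th big_ord_recr [in X in _ + X]big_ord_recr /=. ring. Qed.

Lemma Sh_S n : Sh n.+1 = Sh n + (-1) ^+ n.+1 * ('X^(pp n.+1) + 'X^(pm n.+1)).
Proof.
pose G k := (-1) ^+ k * 'X^(n * k + tri k) * ((1 - 'X^k) * Ap n k).
pose H k := (-1) ^+ k * 'X^(n * k + tri k) * Ap n k.-1.
have dk : forall k, (k <= n)%N -> tS n.+1 k - tS n k = H k.+1 - G k.
  move=> k hk; rewrite /tS /H /G /Ap /= big_nat_recr //=.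
  have e1 : (n.+1 * k + tri k = (n * k + tri k) + k)%N by rewrite mulSn; lia.
  have e2 : (n * k.+1 + (tri k + k.+1) = (n * k + tri k) + k + n.+1)%N.
    by rewrite mulnS; lia.
  rewrite e1 e2 !exprD !exprS. ring.
have GH : forall k, (k < n)%N -> G k.+1 = H k.+1.
  move=> k hk; rewrite /G /H /Ap /=.
  by rewrite [in RHS](big_ltn hk).
have G0 : G 0%N = 0 by rewrite /G expr0 subrr !mul0r mulr0.
rewrite /Sh big_ord_recr /=.
have -> : \sum_(i < n.+1) tS n.+1 i = \sum_(i < n.+1) tS n i + \sum_(i < n.+1) (tS n.+1 i - tS n i).
  by rewrite -big_split /=; apply: eq_bigr => i _; ring.
rewrite -addrA; congr (_ + _).
rewrite -(big_mkord xpredT (fun i => tS n.+1 i - tS n i)) big_nat_recr //=.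
rewrite (@eq_big_nat _ _ _ 0 n _ (fun k => G k.+1 - G k)); last first.
  by move=> k /andP [_ hk]; rewrite dk ?(ltnW hk) // GH.
rewrite telescope_sumr // G0 subr0 dk // /H /tS /Ap /= !big_geq //.
have e3 : (n * n.+1 + (tri n + n.+1) = pm n.+1)%N by rewrite /pm /=; lia.
have e4 : (n.+1 * n.+1 + (tri n + n.+1) = pp n.+1)%N by rewrite /pp /=; lia.
rewrite e3 e4. ring.
Qed.

Lemma shanks n : Sh n = Th n.
Proof.
elim: n => [|n IH].
  by rewrite /Sh /Th !big_ord1 big_ord0 /tS /Ap big_geq // /pp /=; ring.
by rewrite Sh_S Th_S IH.
Qed.
End Shanks.


Section Mult.
Variable R : comNzRingType.
Variable k : nat.
Definition multk (p : {poly R}) := forall i, ~~ (k %| i)%N -> p`_i = 0.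
Lemma mult_1 : multk 1.
Proof. by move=> i hi; rewrite coef1; case: eqP hi => // ->; rewrite dvdn0. Qed.
Lemma mult_X e : (k %| e)%N -> multk ('X^e).
Proof. by move=> he i hi; rewrite coefXn; case: eqP hi => // ->; rewrite he. Qed.
Lemma mult_add p q : multk p -> multk q -> multk (p + q).
Proof. by move=> hp hq i hi; rewrite coefD hp ?hq ?addr0. Qed.
Lemma mult_opp p : multk p -> multk (- p).
Proof. by move=> hp i hi; rewrite coefN hp ?oppr0. Qed.
Lemma mult_scale c p : multk p -> multk (c *: p).
Proof. by move=> hp i hi; rewrite coefZ hp ?mulr0. Qed.
Lemma mult_mul p q : multk p -> multk q -> multk (p * q).
Proof.
move=> hp hq i hi; rewrite coefM big1 // => j _.
have [hj|hj] := boolP (k %| j)%N; last by rewrite hp ?mul0r.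
rewrite hq ?mulr0 //; apply: contra hi => h.
have hji : (j <= i)%N by rewrite -ltnS.
by rewrite -(subnKC hji) dvdn_add.
Qed.
Lemma mult_sum (I : Type) (r : seq I) (P : pred I) (f : I -> {poly R}) :
  (forall i, P i -> multk (f i)) -> multk (\sum_(i <- r | P i) f i).
Proof.
move=> h; apply: (big_ind multk) => //; last exact: mult_add.
by move=> i _; rewrite coef0.
Qed.
Lemma mult_prod (I : Type) (r : seq I) (P : pred I) (f : I -> {poly R}) :
  (forall i, P i -> multk (f i)) -> multk (\prod_(i <- r | P i) f i).
Proof.
move=> h; apply: (big_ind multk) => //; [exact: mult_1 | exact: mult_mul].
Qed.
End Mult.

Lemma frob_sum (R : comNzRingType) (p : nat) (I : Type) (r : seq I) (P : pred I)
   (f : I -> {poly R}) : p \in [pchar R] ->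
  (\sum_(i <- r | P i) f i) ^+ p = \sum_(i <- r | P i) (f i) ^+ p.
Proof.
move=> hp; have hc : p \in [pchar {poly R}] by rewrite pchar_poly.
have hpn : ([pchar {poly R}]).-nat p by rewrite pnatE ?(pcharf_prime hc).
apply: (big_morph (fun x : {poly R} => x ^+ p)).
  by move=> x y /=; rewrite exprDn_pchar.
by rewrite expr0n; case: p hp hc hpn => // /pcharf_prime.
Qed.

Lemma frob_mult (R : comNzRingType) (p : nat) (q : {poly R}) :
  p \in [pchar R] -> multk p (q ^+ p).
Proof.
move=> hp; rewrite -[q]coefK poly_def frob_sum //.
apply: mult_sum => i _; rewrite exprZn -exprM; apply: mult_scale.
by apply: mult_X; rewrite dvdn_mull.
Qed.

Lemma inv_even (T : finType) (s : T -> T) (A : {set T}) :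
  (forall x, x \in A -> s x \in A) -> (forall x, x \in A -> s (s x) = x) ->
  (forall x, x \in A -> s x != x) -> ~~ odd #|A|.
Proof.
move=> h1 h2 h3.
have [n] := ubnP #|A|; elim: n A h1 h2 h3 => // n IH A h1 h2 h3 hn.
have [->|/set0Pn [x hx]] := eqVneq A set0; first by rewrite cards0.
have hsx : s x \in A :\ x by rewrite !inE h3 // h1.
have hc : #|A| = (#|A :\ x :\ s x| + 2)%N.
  by rewrite (cardsD1 x A) hx (cardsD1 (s x) (A :\ x)) hsx; lia.
rewrite hc addn2 /= negbK.
have hB : forall y, y \in A :\ x :\ s x -> [/\ y \in A, y != x & y != s x].
  by move=> y; rewrite !inE => /and3P [-> -> ->].
apply: IH.
- move=> y /hB [yA yx ysx]; rewrite !inE h1 // andbT; apply/andP; split.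
    apply/eqP => e; move/eqP: yx; apply; by rewrite -(h2 _ yA) e h2.
  apply/eqP => e; move/eqP: ysx; apply; by rewrite -(h2 _ yA) e.
- by move=> y /hB [yA _ _]; exact: h2.
- by move=> y /hB [yA _ _]; exact: h3.
- by move: hn; rewrite hc; lia.
Qed.


Definition al (t j : nat) : bool := [&& 0 < j, ~~ (2 %| j) & ~~ (3 * t %| j)]%N.
Definition Gj (R : comNzRingType) (t N j : nat) : {poly R} :=
  \sum_(i < N.+1) ((i != 0%N :> nat) ==> al t j)%:R *: 'X^(j * i).

Lemma prod_bool (I : finType) (B : pred I) :
  (\prod_(i : I) (B i : nat))%N = [forall i, B i].
Proof.
case: (boolP [forall i, B i]) => [/forallP h|/forallPn [i hi]].
  by rewrite big1 // => i _; rewrite h.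
by rewrite (bigD1 i) //= (negbTE hi) mul0n.
Qed.

Lemma bridge (R : comNzRingType) t N :
  (b 3 2 (3 * t) N)%:R = ((\prod_(j < N.+1) Gj R t N j) ^+ 3)`_N.
Proof.
rewrite -prodrXl.
have -> : \prod_(j < N.+1) Gj R t N j ^+ 3 =
          \prod_(p : 'I_N.+1 * 'I_3) Gj R t N p.1.
  rewrite -(pair_big xpredT xpredT (fun (j : 'I_N.+1) (c : 'I_3) => Gj R t N j)) /=.
  by apply: eq_bigr => j _; rewrite prodr_const card_ord.
rewrite /Gj bigA_distr_bigA /= coef_sum.
rewrite /b /colored_partitions_avoid cardsE -sum1_card natr_sum big_mkcond /=.
apply: eq_bigr => f _.
rewrite scaler_prod prodrXr coefZ coefXn -natr_prod prod_bool -natrM.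
rewrite unfold_in /= eq_sym /al.
case: ifP => [/andP[-> ->] // | /negbT]; rewrite negb_and => /orP [] /negbTE -> //; by rewrite muln0.
Qed.



Lemma tri2 k : (2 * tri k = k * k.+1)%N.
Proof. elim: k => [|k IH] //=; rewrite mulnDr IH; lia. Qed.

Section Inv.
Variable M : nat.
Definition pe (j : nat) : nat := if (j <= M)%N then pp j else pm (j - M).
Definition ival (j : nat) : int := if (j <= M)%N then j%:Z else - ((j - M)%:Z).
Lemma pe_ival j : 2 * (pe j)%:Z = ival j * (3 * ival j + 1).
Proof.
rewrite /pe /ival; case: ifP => hj.
  have := tri2 j; rewrite /pp; nia.
have := tri2 (j - M).-1; rewrite /pm.
have : (0 < j - M)%N by lia.
case: (j - M)%N => // m _ /=; nia.
Qed.
End Inv.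



Lemma nonneg3 (z : int) : 0 <= z * (3 * z + 1).
Proof. case: (lerP 0 z) => h; nia. Qed.
Lemma bnd (z : int) (m : nat) : z * (3 * z + 1) <= 2 * m%:Z -> (`|z| <= m)%N.
Proof.
move=> h; case: (lerP 0 z) => h0.
  have : 0 <= z * (3 * z - 1) by case: (lerP 1 z) => h1; nia.
  lia.
have : 0 <= z * (z + 1) by case: (lerP z (-1)) => h1; nia.
lia.
Qed.

Section Inv2.
Variable M i : nat.
Hypothesis hi : (i < M)%N.
Hypothesis hi3 : (i %% 3 = 2)%N.
Definition TT := 'I_(M.+1 + M).
Definition encn (z : int) : nat := if (0 <= z) then `|z|%N else (M + `|z|)%N.
Definition enc (z : int) : TT := @inord (M + M) (encn z).
Lemma enc_val z : (`|z| <= M)%N -> nat_of_ord (enc z) = encn z.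
Proof. move=> hz; have h : (encn z < (M + M).+1)%N by rewrite /encn; case: ifP; lia.
by rewrite /enc inordK. Qed.
Lemma ival_enc z : (`|z| <= M)%N -> ival M (enc z) = z.
Proof.
move=> hz; rewrite enc_val // /ival /encn.
case: (boolP (0 <= z)) => h0; case: (boolP (_ <= M)%N) => h1; lia.
Qed.
Lemma enc_ival (j : TT) : enc (ival M j) = j.
Proof.
apply: val_inj => /=; have hj := ltn_ord j.
have hb : (`|ival M j| <= M)%N by rewrite /ival; case: ifP; lia.
rewrite enc_val // /encn /ival; case: (boolP (j <= M)%N) => h /=; [case: (boolP (0 <= (j:int))) => h2 | case: (boolP (0 <= - ((j - M)%N : int))) => h2]; lia.
Qed.

Definition inA (x : TT * TT) : bool := (pe M x.1 + 2 * pe M x.2 == i)%N.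
Definition A : {set TT * TT} := [set x | inA x].
Definition Jp (x : TT * TT) : int := ((ival M x.1 - 4 * ival M x.2 - 1) %/ 3)%Z.
Definition Kp (x : TT * TT) : int := ((- 2 * ival M x.1 - ival M x.2 - 1) %/ 3)%Z.
Definition sig (x : TT * TT) : TT * TT := if inA x then (enc (Jp x), enc (Kp x)) else x.

Lemma inA_int x : inA x -> ival M x.1 * (3 * ival M x.1 + 1) + 2 * (ival M x.2 * (3 * ival M x.2 + 1)) = 2 * i%:Z.
Proof.
rewrite /inA => /eqP h; rewrite -!pe_ival -h; lia.
Qed.

Lemma key x : inA x ->
  [/\ 3 * Jp x = ival M x.1 - 4 * ival M x.2 - 1,
      3 * Kp x = - 2 * ival M x.1 - ival M x.2 - 1,
      Jp x * (3 * Jp x + 1) + 2 * (Kp x * (3 * Kp x + 1)) = 2 * i%:Z,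
      (`|Jp x| <= M)%N & (`|Kp x| <= M)%N].
Proof.
move=> hx; have h := inA_int hx; rewrite /Jp /Kp.
set v := ival M x.1 in h *; set w := ival M x.2 in h *.
have hq : exists q : int, i%:Z = 3 * q + 2 by exists (i %/ 3)%N; lia.
case: hq => q hq.
have e1 : 3 * ((v - 4 * w - 1) %/ 3)%Z = v - 4 * w - 1 by nia.
have e2 : 3 * ((- 2 * v - w - 1) %/ 3)%Z = - 2 * v - w - 1 by nia.
set a := ((v - 4 * w - 1) %/ 3)%Z in e1 *; set b := ((- 2 * v - w - 1) %/ 3)%Z in e2 *.
have e3 : a * (3 * a + 1) + 2 * (b * (3 * b + 1)) = 2 * i%:Z by rewrite -h; nia.
have ha := nonneg3 a; have hb := nonneg3 b.
split => //; apply: bnd; lia.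
Qed.

Lemma sig_in x : x \in A -> sig x \in A.
Proof.
rewrite !inE => hx; rewrite /sig hx; have [e1 e2 e3 h1 h2] := key hx.
rewrite /inA /=; apply/eqP.
have := pe_ival M (enc (Jp x)); have := pe_ival M (enc (Kp x)).
rewrite !ival_enc //; lia.
Qed.

Lemma sig_inv x : x \in A -> sig (sig x) = x.
Proof.
case: x => j k hx; have hs := sig_in hx; rewrite inE in hx; rewrite inE in hs.
have [e1 e2 _ h1 h2] := key hx; have [f1 f2 _ _ _] := key hs.
have E : sig (j, k) = (enc (Jp (j, k)), enc (Kp (j, k))) by rewrite /sig hx.
have i1 : ival M (sig (j, k)).1 = Jp (j, k) by rewrite E ival_enc.
have i2 : ival M (sig (j, k)).2 = Kp (j, k) by rewrite E ival_enc.
rewrite i1 i2 in f1 f2.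
have e1' : 3 * Jp (j, k) = ival M j - 4 * ival M k - 1 := e1.
have e2' : 3 * Kp (j, k) = -2 * ival M j - ival M k - 1 := e2.
have f1' : 3 * Jp (sig (j, k)) = Jp (j, k) - 4 * Kp (j, k) - 1 := f1.
have f2' : 3 * Kp (sig (j, k)) = -2 * Jp (j, k) - Kp (j, k) - 1 := f2.
rewrite {1}/sig hs.
have [-> ->] : Jp (sig (j, k)) = ival M j /\ Kp (sig (j, k)) = ival M k.
  move: e1' e2' f1' f2'.
  generalize (Jp (sig (j, k))) (Kp (sig (j, k))) (Jp (j, k)) (Kp (j, k)) (ival M j) (ival M k).
  move=> a b c d v w e1' e2' f1' f2'; split; lia.
by rewrite !enc_ival.
Qed.

Lemma sig_neq x : x \in A -> sig x != x.
Proof.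
case: x => j k; rewrite inE => hx; rewrite /sig hx; have [e1 _ _ h1 _] := key hx.
have e1' : 3 * Jp (j, k) = ival M j - 4 * ival M k - 1 := e1.
apply/eqP => e; have := congr1 (fun y : TT * TT => ival M y.1) e; rewrite /= ival_enc // => e'.
have e'' : Jp (j, k) = ival M j := e'.
move: e1' e''; generalize (Jp (j, k)) (ival M j) (ival M k) => a v w; lia.
Qed.

Lemma A_even : ~~ odd #|A|.
Proof. apply: (@inv_even _ sig) => x; [exact: sig_in | exact: sig_inv | exact: sig_neq]. Qed.
End Inv2.


Lemma eqm_sum (F : fieldType) N (I : Type) (r : seq I) (P : pred I) (f g : I -> {poly F}) :
  (forall i, P i -> eqm N (f i) (g i)) ->
  eqm N (\sum_(i <- r | P i) f i) (\sum_(i <- r | P i) g i).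
Proof.
move=> h; apply: (big_ind2 (eqm N) (eqm_refl N 0)) => //; exact: eqm_add.
Qed.

Lemma mult_exp (R : comNzRingType) k (p : {poly R}) n : multk k p -> multk k (p ^+ n).
Proof.
move=> h; elim: n => [|n IH]; first exact: mult_1.
by rewrite exprS; apply: mult_mul.
Qed.

Lemma hc2 : 2 \in [pchar 'F_2]. Proof. exact: pchar_Fp. Qed.
Lemma hc2p : 2 \in [pchar {poly 'F_2}]. Proof. by rewrite pchar_poly hc2. Qed.

Lemma m1F2 : (-1 : {poly 'F_2}) = 1. Proof. have := oppr_char2 hc2p (1 : {poly 'F_2}). done. Qed.

Lemma Th_F2 M : Th 'F_2 M = \sum_(j : TT M) 'X^(pe M j).
Proof.
rewrite /Th big_split_ord /=; congr (_ + _); apply: eq_bigr => k _;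
  rewrite m1F2 expr1n mul1r /pe /=.
  by rewrite -ltnS ltn_ord.
have -> : (M.+1 + k <= M)%N = false by lia.
by congr ('X^ (pm _)); lia.
Qed.

Lemma Eu_cube M i : (i < M)%N -> (i %% 3 = 2)%N -> ((Th 'F_2 M) ^+ 3)`_i = 0.
Proof.
move=> hi hi3.
rewrite exprS Th_F2 frob_sum; last exact: hc2.
rewrite mulr_suml.
under eq_bigr do rewrite mulr_sumr.
rewrite pair_big /= coef_sum.
have -> : \sum_(p : TT M * TT M) ('X^(pe M p.1) * 'X^(pe M p.2) ^+ 2 : {poly 'F_2})`_i =
          (#|A M i|)%:R.
  rewrite /A cardsE -sum1_card natr_sum [RHS]big_mkcond /=.
  apply: eq_bigr => x _; rewrite -exprM -exprD coefXn unfold_in /inA mulnC eq_sym.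
  have -> : eqn (pe M x.1 + 2 * pe M x.2) i = ((pe M x.1 + 2 * pe M x.2)%N == i) by [].
  by case: (_ == _).
apply/eqP; rewrite -(dvdn_pcharf hc2) dvdn2.
exact: A_even.
Qed.


Lemma pair_prod (R : comNzRingType) (g : nat -> R) K :
  \prod_(0 <= j < 2 * K) g j = \prod_(0 <= i < K) (g (2 * i)%N * g (2 * i).+1).
Proof.
elim: K => [|K IH]; first by rewrite !big_geq.
rewrite [RHS]big_nat_recr //= -IH.
have -> : (2 * K.+1 = (2 * K).+2)%N by lia.
by rewrite !big_nat_recr //= mulrA.
Qed.

Lemma sq1 (a : {poly 'F_2}) : (1 - a) ^+ 2 = 1 - a ^+ 2.
Proof.
have hn : ([pchar {poly 'F_2}]).-nat 2 by rewrite pnatE // hc2p.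
by rewrite exprDn_pchar // sqrrN expr1n (oppr_char2 hc2p (a ^+ 2)).
Qed.

Section Mod2.
Variable t N : nat.
Local Notation F := 'F_2.
Local Notation M := N.+1.
Definition Hs (j : nat) : {poly F} := \sum_(i < N.+1) 'X^(j * i).
Definition Gx (j : nat) : {poly F} := if al t j then Hs j else 1.

Lemma L1 j : Gj F t N j = Gx j.
Proof.
rewrite /Gj /Gx; case: ifP => h.
  by apply: eq_bigr => i _; rewrite implybT scale1r.
rewrite big_ord_recl /= muln0 expr0 scale1r big1 ?addr0 // => i _.
by rewrite scale0r.
Qed.

Lemma sum_zero (I : Type) (r : seq I) (P : pred I) (f : I -> {poly F}) :
  (forall i, P i -> eqm N (f i) 0) -> eqm N (\sum_(i <- r | P i) f i) 0.
Proof.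
move=> h; have := @eqm_sum F N I r P f (fun=> 0) h; by rewrite big1_eq.
Qed.

Lemma prod_one (I : Type) (r : seq I) (P : pred I) (f : I -> {poly F}) :
  (forall i, P i -> eqm N (f i) 1) -> eqm N (\prod_(i <- r | P i) f i) 1.
Proof.
move=> h; have := @eqm_prod F N I r P f (fun=> 1) h; by rewrite big1_eq.
Qed.

Lemma Hs_big j : (N < j)%N -> eqm N (Hs j) 1.
Proof.
move=> hj; rewrite /Hs big_ord_recl muln0 expr0 -{2}[1]addr0.
apply: eqm_add; first exact: eqm_refl.
apply: sum_zero => i _; rewrite lift0; apply: eqm_Xbig; nia.
Qed.



Lemma L3 : eqm N (\prod_(0 <= j < N.+1) Gx j) (\prod_(0 <= j < 2 * M) Gx j).
Proof.
rewrite (@big_cat_nat _ _ _ N.+1 0 (2 * M)) //=; last by lia.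
rewrite -{1}[\prod_(0 <= j < N.+1) Gx j]mulr1; apply: eqm_mul; first exact: eqm_refl.
apply: eqm_sym; rewrite big_nat_cond; apply: prod_one => j /andP [/andP [hj _] _].
rewrite /Gx; case: ifP => _; [exact: Hs_big | exact: eqm_refl].
Qed.

Definition Pp : {poly F} := \prod_(0 <= i < M) Gx (2 * i).+1.
Definition Wp : {poly F} := \prod_(0 <= i < M) (if al t (2 * i).+1 then 1 - 'X^((2 * i).+1) else 1).
Definition Cp : {poly F} := \prod_(0 <= i < M) (if al t (2 * i).+1 then 1 else 1 - 'X^((2 * i).+1)).
Definition Od : {poly F} := \prod_(0 <= i < M) (1 - 'X^((2 * i).+1)).

Lemma L5 : \prod_(0 <= j < 2 * M) Gx j = Pp.
Proof.
rewrite pair_prod /Pp; apply: eq_bigr => i _.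
have -> : Gx (2 * i) = 1.
  rewrite /Gx /al; have -> : (2 %| 2 * i)%N by apply: dvdn_mulr.
  by rewrite andbF.
by rewrite mul1r.
Qed.

Lemma geo j : (0 < j)%N -> eqm N (Hs j * (1 - 'X^j)) 1.
Proof.
move=> hj; have -> : Hs j * (1 - 'X^j) = 1 - 'X^(j * N.+1).
  rewrite /Hs mulr_suml -(big_mkord xpredT (fun i => 'X^(j * i) * (1 - 'X^j))).
  rewrite (@eq_big_nat _ _ _ 0 N.+1 _ (fun i => (- 'X^(j * i.+1)) - (- 'X^(j * i)))).
    by rewrite telescope_sumr // muln0 expr0; ring.
  by move=> i _; rewrite mulnS exprD; ring.
apply: eqm_1subX; nia.
Qed.

Lemma L6 : eqm N (Pp * Wp) 1.
Proof.
rewrite /Pp /Wp -big_split /=; apply: prod_one => i _.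
rewrite /Gx; case: ifP => _; last by rewrite mulr1; exact: eqm_refl.
exact: geo.
Qed.

Lemma L7 : Wp * Cp = Od.
Proof.
rewrite /Wp /Cp /Od -big_split /=; apply: eq_bigr => i _.
by case: ifP => _; rewrite ?mul1r ?mulr1.
Qed.

Lemma L8 : multk 3 Cp.
Proof.
apply: mult_prod => i _; case: ifP => h; first exact: mult_1.
apply: mult_add; first exact: mult_1.
apply: mult_opp; apply: mult_X.
move/negbT: h; rewrite /al => h.
apply: (dvdn_trans (dvdn_mulr t (dvdnn 3))).
apply: contraR h => h3; apply/and3P; split => //.
by rewrite dvdn2 negbK /= oddM.
Qed.

Definition Fm : {poly F} := Ap F M 0.

Lemma L9 : Ap F (2 * M) 0 = Od * Fm ^+ 2.
Proof.
rewrite /Ap pair_prod /Od /Fm /Ap -prodrXl -big_split /=.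
apply: eq_bigr => i _; congr (_ * _).
by rewrite sq1 -exprM mulnC; congr (1 - 'X^_); lia.
Qed.

Lemma L10 : eqm N (Ap F (2 * M) 0) Fm.
Proof.
rewrite /Ap /Fm /Ap (@big_cat_nat _ _ _ M 0 (2 * M)) //=; last by lia.
rewrite -[X in eqm _ _ X]mulr1; apply: eqm_mul; first exact: eqm_refl.
rewrite big_nat_cond; apply: prod_one => j /andP [/andP [hj _] _].
apply: eqm_1subX; lia.
Qed.

Lemma L11 : Fm`_0 != 0.
Proof.
rewrite -horner_coef0 /Fm /Ap horner_prod big1 ?oner_neq0 // => i _.
by rewrite !hornerE expr0n subr0.
Qed.

Lemma L12 : eqm N 1 (Od * Fm).
Proof.
apply: (@eqm_cancel _ _ Fm) ; first exact: L11.
rewrite mulr1; apply: eqm_trans (eqm_sym L10) _.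
by rewrite L9 expr2 mulrCA mulrA [Fm * Od]mulrC -mulrA; apply: eqm_refl.
Qed.

Lemma L13 : eqm N Pp (Cp * Fm).
Proof.
apply: eqm_trans (_ : eqm N Pp (Pp * (Od * Fm))) _.
  rewrite -{1}[Pp]mulr1; apply: eqm_mul; [exact: eqm_refl | exact: L12].
rewrite -L7.
have -> : Pp * (Wp * Cp * Fm) = (Pp * Wp) * (Cp * Fm) by ring.
rewrite -[X in eqm _ _ X]mul1r.
apply: eqm_mul; [exact: L6 | exact: eqm_refl].
Qed.

Lemma L14 : eqm N Fm (Th F M).
Proof.
rewrite -shanks /Sh big_ord_recl /=.
have -> : tS F M 0 = Fm by rewrite /tS /Fm expr0 muln0 /= expr0 !mul1r.
rewrite -[X in eqm _ X _]addr0; apply: eqm_add; first exact: eqm_refl.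
apply: eqm_sym; apply: sum_zero => k _; rewrite /tS /bump /=.
rewrite -[X in eqm _ _ X](mulr0 ((-1) ^+ k.+1)) -mulrA.
apply: eqm_mul; first exact: eqm_refl.
rewrite -[X in eqm _ _ X](mul0r (Ap F M k.+1)).
apply: eqm_mul; last exact: eqm_refl.
apply: eqm_Xbig; nia.
Qed.

Lemma mod2_main : (N %% 3 = 2)%N -> ((\prod_(j < N.+1) Gj F t N j) ^+ 3)`_N = 0.
Proof.
move=> hN.
have e1 : \prod_(j < N.+1) Gj F t N j = \prod_(0 <= j < N.+1) Gx j.
  by rewrite big_mkord; apply: eq_bigr => j _; exact: L1.
have h : eqm N ((\prod_(j < N.+1) Gj F t N j) ^+ 3) ((Cp * Th F M) ^+ 3).
  apply: eqm_exp; rewrite e1; apply: eqm_trans L3 _; rewrite L5.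
  apply: eqm_trans L13 _; apply: eqm_mul; [exact: eqm_refl | exact: L14].
rewrite (eqm_coef h) // exprMn coefM big1 // => j _.
have [hj|hj] := boolP (3 %| j)%N; last first.
  by rewrite (mult_exp 3 L8) ?mul0r.
rewrite Eu_cube ?mulr0 //.
  by have := ltn_ord j; lia.
by have := ltn_ord j; move: hj; lia.
Qed.
End Mod2.


Lemma hc3 : 3 \in [pchar 'F_3]. Proof. exact: pchar_Fp. Qed.

Local Close Scope ring_scope.

Theorem mainTheorem17 (t n : nat) :
  odd t -> 6 %| b 3 2 (3 * t) (3 * n + 2).
Proof.
move=> _.
have hN : ((3 * n + 2) %% 3 = 2)%N by lia.
have h2 : (2 %| b 3 2 (3 * t) (3 * n + 2))%N.
  rewrite (dvdn_pcharf hc2) (bridge 'F_2); apply/eqP; exact: mod2_main.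
have h3 : (3 %| b 3 2 (3 * t) (3 * n + 2))%N.
  rewrite (dvdn_pcharf hc3) (bridge 'F_3); apply/eqP; apply: (frob_mult _ hc3).
  lia.
have -> : 6 = (2 * 3)%N by [].
by rewrite Gauss_dvd // h2 h3.
Qed.
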